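(* Let $A$ and $B$ be complex Hilbert spaces and $n\geq 2$. Let $\vec{\alpha}=(\alpha_1,\ldots,\alpha_n)\in\mathcal{A}_n$. Then for all bounded operators $M_1,\ldots,M_n:A\rightarrow B$ and all positive semidefinite trace class operators $\rho$ on $A$, \[ \left(\sum_{i=1}^n M_i\right)\rho\left(\sum_{i=1}^n M_i\right)^\dagger \leq \sum_{i=1}^n \alpha_i M_i\rho M_i^\dagger . \] Conversely, let $\vec{\alpha}\in\mathbb{R}^n$ and let $(P_1,\ldots,P_n)$ be a projective measurement on $A$ (projections $P_i=P_i^\dagger=P_i^2$ with $\sum_{i=1}^n P_i=\mathbb{1}_A$) with $P_i\neq 0$ for all $i$. If $\left(\sum_i P_i\right)\rho\left(\sum_i P_i\right)^\dagger=\rho \leq \sum_{i=1}^n \alpha_i P_i\rho P_i$ holds for all positive semidefinite trace class operators $\rho$ on $A$, then $\vec{\alpha}\in\mathcal{A}_n$.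
   Context: $\mathcal{A}_n := \{\vec{\alpha}\in\mathbb{R}^n : \operatorname{diag}(\vec{\alpha}) \geq J\}$, where $\operatorname{diag}(\vec{\alpha})=\sum_{i=1}^n\alpha_i|i\rangle\langle i|$ is the $n\times n$ diagonal matrix with entries $\alpha_i$, $J=\sum_{i,j=1}^n|i\rangle\langle j|$ is the $n\times n$ all-ones matrix, and $\geq$ denotes the Löwner (positive semidefinite) order. All operator inequalities are in the Löwner order. *)

(* Defs.v *)
From HB Require Import structures.
From mathcomp Require Import all_boot all_order all_algebra.
From mathcomp Require Import reals.
From mathcomp.real_closed Require Import complex.
From Stdlib Require Import ClassicalEpsilon.

Set Implicit Arguments.
Unset Strict Implicit.
Unset Printing Implicit Defensive.
Import Order.TTheory GRing.Theory Num.Theory.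
Local Open Scope ring_scope.

(* Physics convention: the inner product is conjugate-linear in its    *)
(* first argument and linear in its second argument.                   *)
Record HilbertSpace (R : realType) := {
  hs_car :> lmodType R[i];
  ip : hs_car -> hs_car -> R[i];
  ip_linr : forall (a : R[i]) (x y z : hs_car),
      ip x (a *: y + z) = a * ip x y + ip x z;
  ip_conj : forall x y : hs_car, ip y x = Num.conj (ip x y);
  ip_pos : forall x : hs_car, 0 <= ip x x;
  ip_def : forall x : hs_car, ip x x = 0 -> x = 0;
  hs_complete : forall u : nat -> hs_car,
      (forall e : R, 0 < e -> exists N : nat, forall m n : nat, (N <= m)%N -> (N <= n)%N ->
          Num.sqrt (complex.Re (ip (u m - u n) (u m - u n))) < e) ->
      exists l : hs_car, forall e : R, 0 < e -> exists N : nat, forall n : nat, (N <= n)%N ->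
          Num.sqrt (complex.Re (ip (u n - l) (u n - l))) < e
}.

Section Ops.
Variable R : realType.

Definition hnorm (A : HilbertSpace R) (x : A) : R :=
  Num.sqrt (complex.Re (ip x x)).

Definition bounded_op (A B : HilbertSpace R) (f : A -> B) : Prop :=
  (forall (a : R[i]) (x y : A), f (a *: x + y) = a *: f x + f y) /\
  exists K : R, forall x : A, hnorm (f x) <= K * hnorm x.

Definition is_adjoint (A B : HilbertSpace R) (f : A -> B) (g : B -> A) : Prop :=
  forall (x : A) (y : B), ip (f x) y = ip x (g y).

(* The adjoint f^dagger of f (exists and is unique for bounded f;
   chosen by classical choice, arbitrary otherwise). *)
Definition adjoint (A B : HilbertSpace R) (f : A -> B) : B -> A :=
  epsilon (inhabits (fun _ : B => (0 : A))) (fun g => is_adjoint f g).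

Definition psd_op (A : HilbertSpace R) (rho : A -> A) : Prop :=
  bounded_op rho /\ forall x : A, 0 <= ip x (rho x).

Definition orthonormal (A : HilbertSpace R) (s : seq A) : Prop :=
  forall i j : nat, (i < size s)%N -> (j < size s)%N ->
    ip (nth 0 s i) (nth 0 s j) = (i == j)%:R.

(* A positive semidefinite operator is trace class iff its trace,
   i.e. the sup over finite orthonormal families e of sum <e,rho e>,
   is finite. *)
Definition psd_trace_class (A : HilbertSpace R) (rho : A -> A) : Prop :=
  psd_op rho /\
  exists T : R, forall s : seq A, orthonormal s ->
    \sum_(e <- s) ip e (rho e) <= T%:C%C.

Definition loewner (A : HilbertSpace R) (X Y : A -> A) : Prop :=
  forall x : A, ip x (X x) <= ip x (Y x).

(* A_n = { alpha in R^n | diag(alpha) >= J }, Loewner order on n x n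
   (complex) matrices: M >= 0 iff v^* M v >= 0 for all v in C^n. *)
Definition psd_mx (n : nat) (M : 'M[R[i]]_n) : Prop :=
  forall v : 'cV[R[i]]_n, 0 <= (((map_mx Num.conj v)^T *m M *m v) ord0 ord0).

Definition in_An (n : nat) (alpha : 'I_n -> R) : Prop :=
  psd_mx (diag_mx (\row_i (alpha i)%:C%C) - const_mx 1).

Definition sum_op (A B : HilbertSpace R) (n : nat) (M : 'I_n -> A -> B) : A -> B :=
  fun x => \sum_i M i x.

Definition proj_measurement (A : HilbertSpace R) (n : nat) (P : 'I_n -> A -> A) : Prop :=
  (forall i, bounded_op (P i)) /\
  (forall i, P i = adjoint (P i)) /\
  (forall i x, P i (P i x) = P i x) /\
  (forall x : A, sum_op P x = x).

End Ops.

(* Main.v *)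
Require Import Defs.
From HB Require Import structures.
From mathcomp Require Import all_boot all_order all_algebra.
From mathcomp Require Import classical_sets reals.
From mathcomp.real_closed Require Import complex.
From mathcomp Require Import ring lra.
From Stdlib Require Import Classical ClassicalEpsilon FunctionalExtensionality.
Set Implicit Arguments.
Unset Strict Implicit.
Unset Printing Implicit Defensive.
Import Order.TTheory GRing.Theory Num.Theory.
Local Open Scope ring_scope.

Section Lin.
Variable R : realType.
Local Notation C := R[i].
Definition linf (U V : lmodType C) (f : U -> V) :=
  forall (a : C) x y, f (a *: x + y) = a *: f x + f y.
Variables (U V : lmodType C) (f : U -> V) (hf : linf f).
Lemma lf0 : f 0 = 0.
Proof. have h := hf 1 0 0; rewrite scaler0 addr0 scale1r in h.
by apply/(addrI (f 0)); rewrite addr0 -h. Qed.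
Lemma lfD x y : f (x + y) = f x + f y.
Proof. by have := hf 1 x y; rewrite !scale1r. Qed.
Lemma lfZ a x : f (a *: x) = a *: f x.
Proof. by have := hf a x 0; rewrite !addr0 lf0 addr0. Qed.
Lemma lfN x : f (- x) = - f x.
Proof. by rewrite -scaleN1r lfZ scaleN1r. Qed.
Lemma lfB x y : f (x - y) = f x - f y.
Proof. by rewrite lfD lfN. Qed.
Lemma lf_sum (I : Type) (r : seq I) (P : pred I) (F : I -> U) :
  f (\sum_(i <- r | P i) F i) = \sum_(i <- r | P i) f (F i).
Proof. by elim/big_rec2: _ => [|i y1 y2 _ <-]; rewrite ?lf0 ?lfD. Qed.
End Lin.

Section IP.
Variable R : realType.
Local Notation C := R[i].
Variable H : HilbertSpace R.
Implicit Types x y z : H.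

Lemma ip0r x : ip x 0 = 0.
Proof. have h := ip_linr 1 x 0 0; rewrite scaler0 addr0 mul1r in h.
by apply/(addrI (ip x 0)); rewrite addr0 -h. Qed.
Lemma ipDr x y z : ip x (y + z) = ip x y + ip x z.
Proof. by have := ip_linr 1 x y z; rewrite scale1r mul1r. Qed.
Lemma ipZr x a y : ip x (a *: y) = a * ip x y.
Proof. by have := ip_linr a x y 0; rewrite !addr0 ip0r addr0. Qed.
Lemma ipNr x y : ip x (- y) = - ip x y.
Proof. by rewrite -scaleN1r ipZr mulN1r. Qed.
Lemma ipBr x y z : ip x (y - z) = ip x y - ip x z.
Proof. by rewrite ipDr ipNr. Qed.
Lemma ip_sumr x (I : Type) (r : seq I) (P : pred I) (F : I -> H) :
  ip x (\sum_(i <- r | P i) F i) = \sum_(i <- r | P i) ip x (F i).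
Proof. by elim/big_rec2: _ => [|i y1 y2 _ <-]; rewrite ?ip0r ?ipDr. Qed.
Lemma ip0l x : ip 0 x = 0.
Proof. by rewrite ip_conj ip0r rmorph0. Qed.
Lemma ipDl x y z : ip (y + z) x = ip y x + ip z x.
Proof. by rewrite ![ip _ x]ip_conj ipDr rmorphD. Qed.
Lemma ipZl x a y : ip (a *: y) x = Num.conj a * ip y x.
Proof. by rewrite ![ip _ x]ip_conj ipZr rmorphM. Qed.
Lemma ipNl x y : ip (- y) x = - ip y x.
Proof. by rewrite ![ip _ x]ip_conj ipNr rmorphN. Qed.
Lemma ipBl x y z : ip (y - z) x = ip y x - ip z x.
Proof. by rewrite ipDl ipNl. Qed.
Lemma ip_suml x (I : Type) (r : seq I) (P : pred I) (F : I -> H) :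
  ip (\sum_(i <- r | P i) F i) x = \sum_(i <- r | P i) ip (F i) x.
Proof. by elim/big_rec2: _ => [|i y1 y2 _ <-]; rewrite ?ip0l ?ipDl. Qed.

Definition Nm x : R := complex.Re (ip x x).
Definition re x y : R := complex.Re (ip x y).

Lemma ipxx x : ip x x = (Nm x)%:C%C.
Proof. have := ip_pos x; rewrite /Nm; case: (ip x x) => a b.
by rewrite lecE /= => /andP[/eqP -> _]. Qed.
Lemma Nm_ge0 x : 0 <= Nm x.
Proof. by have := ip_pos x; rewrite ipxx lecR. Qed.
Lemma Nm_eq0 x : Nm x = 0 -> x = 0.
Proof. by move=> h; apply: ip_def; rewrite ipxx h. Qed.
Lemma Nm0 : Nm 0 = 0.
Proof. by rewrite /Nm ip0r. Qed.

Lemma ReM_real (t : R) (w : C) : complex.Re (t%:C%C * w) = t * complex.Re w.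
Proof. by case: w => a b /=; ring. Qed.
Lemma ReD (v w : C) : complex.Re (v + w) = complex.Re v + complex.Re w.
Proof. by case: v; case: w. Qed.
Lemma ReN (w : C) : complex.Re (- w) = - complex.Re w.
Proof. by case: w. Qed.
Lemma ReJ (w : C) : complex.Re (Num.conj w) = complex.Re w.
Proof. by case: w. Qed.
Lemma ImJ (w : C) : complex.Im (Num.conj w) = - complex.Im w.
Proof. by case: w. Qed.
Lemma conj_real (t : R) : Num.conj (t%:C%C) = t%:C%C.
Proof. exact: conjc_real. Qed.

Lemma reC x y : re x y = re y x.
Proof. by rewrite /re ip_conj ReJ. Qed.
Lemma reDr x y z : re x (y + z) = re x y + re x z.
Proof. by rewrite /re ipDr ReD. Qed.
Lemma reZr x (t : R) y : re x (t%:C%C *: y) = t * re x y.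
Proof. by rewrite /re ipZr ReM_real. Qed.
Lemma reNr x y : re x (- y) = - re x y.
Proof. by rewrite /re ipNr ReN. Qed.
Lemma NmD x y : Nm (x + y) = Nm x + 2 * re x y + Nm y.
Proof. rewrite /Nm ipDl !ipDr !ReD -/(re x y) -/(re y x) -/(Nm x) -/(Nm y) (reC y x).
ring. Qed.
Lemma NmN x : Nm (- x) = Nm x.
Proof. by rewrite /Nm ipNl ipNr opprK. Qed.
Lemma NmZ (t : R) x : Nm (t%:C%C *: x) = t ^+ 2 * Nm x.
Proof. by rewrite /Nm ipZl ipZr conj_real mulrA -rmorphM ReM_real expr2. Qed.
Lemma NmB x y : Nm (x - y) = Nm x - 2 * re x y + Nm y.
Proof. by rewrite NmD reNr NmN; ring. Qed.
Lemma re_eq0 x : re 0 x = 0.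
Proof. by rewrite /re ip0l. Qed.

Lemma quad_disc (a b c : R) : 0 <= a ->
  (forall t, 0 <= c - 2 * t * b + t ^+ 2 * a) -> b ^+ 2 <= a * c.
Proof.
move=> a0 h; have [az|ap] := eqVneq a 0.
  have [bz|bn] := eqVneq b 0; first by rewrite bz az; lra.
  have := h ((c + 1) / (2 * b)); rewrite az.
  have -> : c - 2 * ((c + 1) / (2 * b)) * b + ((c + 1) / (2 * b)) ^+ 2 * 0 = -1.
    by field.
  lra.
have a1 : 0 < a by rewrite lt_def ap a0.
have := h (b / a).
have -> : c - 2 * (b / a) * b + (b / a) ^+ 2 * a = (a * c - b ^+ 2) / a.
  by field.
rewrite pmulr_lge0 ?invr_gt0 // subr_ge0 //.
Qed.

Lemma CS x y : re x y ^+ 2 <= Nm x * Nm y.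
Proof.
apply: quad_disc; first exact: Nm_ge0.
move=> t; have := Nm_ge0 (y - t%:C%C *: x).
by rewrite NmB reZr NmZ reC; lra.
Qed.

Lemma conjMC (w : C) : Num.conj w * w =
  (complex.Re w ^+ 2 + complex.Im w ^+ 2)%:C%C.
Proof. case: w => a b; apply/eqP; rewrite eq_complex /= !expr2; apply/andP; split; apply/eqP; ring. Qed.

Lemma NmZc (b : C) y : Nm (b *: y) = complex.Re (Num.conj b * b) * Nm y.
Proof. by rewrite /Nm ipZl ipZr mulrA ipxx [_ * (Nm y)%:C%C]mulrC ReM_real mulrC. Qed.

Lemma CSc x y : complex.Re (Num.conj (ip x y) * ip x y) <= Nm x * Nm y.
Proof.
set c := ip x y; set a := complex.Re (Num.conj c * c).
have a0 : 0 <= a by rewrite /a conjMC /=; nra.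
have h : re x (Num.conj c *: y) = a by rewrite /re ipZr.
have := CS x (Num.conj c *: y); rewrite h NmZc -/a.
have P0 : 0 <= Nm x * Nm y by rewrite mulr_ge0 ?Nm_ge0.
rewrite mulrCA; move: P0; set P := Nm x * Nm y => P0.
have [->|an] := eqVneq a 0; first by [].
have ap : 0 < a by rewrite lt_def an a0.
by rewrite conjCK [c * _]mulrC -/a expr2 (ler_pM2l ap).
Qed.
End IP.

Section RealAux.
Variable R : realType.
Lemma sqrt_lt (e a : R) : 0 < e -> a < e ^+ 2 -> Num.sqrt a < e.
Proof.
move=> e0 h; rewrite -(@gtr0_norm _ e) // -sqrtr_sqr ltr_sqrt //.
by rewrite exprn_gt0.
Qed.
Lemma lt_of_sqrt (e a : R) : 0 <= a -> Num.sqrt a < e -> a < e ^+ 2.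
Proof.
move=> a0 h; rewrite -(sqr_sqrtr a0); have := sqrtr_ge0 a.
move: h; set s := Num.sqrt a; nra.
Qed.
Lemma le_sqrtM (r a b : R) : 0 <= a -> 0 <= b -> r ^+ 2 <= a * b ->
  r <= Num.sqrt a * Num.sqrt b.
Proof.
move=> a0 b0 h; rewrite -sqrtrM //; apply: le_trans (ler_norm r) _.
by rewrite -sqrtr_sqr ler_wsqrtr.
Qed.
Lemma inv_small (e : R) : 0 < e -> exists N0 : nat, forall k : nat, (N0 <= k)%N ->
  (k.+1%:R)^-1 < e.
Proof.
move=> e0; exists (Num.Def.archi_bound e^-1) => k hk.
have ei : 0 <= e^-1 by rewrite invr_ge0 ltW.
have h1 := archi_boundP ei.
have h2 : ((Num.Def.archi_bound e^-1)%:R : R) <= k%:R by rewrite ler_nat.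
have h3 : e^-1 < k.+1%:R by rewrite -addn1 natrD; lra.
by rewrite invf_plt ?posrE ?ltr0Sn.
Qed.
End RealAux.

Section Riesz.
Variable R : realType.
Local Notation C := R[i].
Variable H : HilbertSpace R.
Variable f : H -> C.
Hypothesis hf : forall (a : C) (x y : H), f (a *: x + y) = a * f x + f y.
Hypothesis hb : exists K : R, forall x, complex.Re (f x) ^+ 2 <= K * Nm x.

Lemma f0 : f 0 = 0.
Proof. have h := hf 1 0 0; rewrite scaler0 addr0 mul1r in h.
by apply/(addrI (f 0)); rewrite addr0 -h. Qed.
Lemma fD x y : f (x + y) = f x + f y.
Proof. by have := hf 1 x y; rewrite scale1r mul1r. Qed.
Lemma fZ a x : f (a *: x) = a * f x.
Proof. by have := hf a x 0; rewrite !addr0 f0 addr0. Qed.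

Definition rf x := complex.Re (f x).
Lemma rfD x y : rf (x + y) = rf x + rf y.
Proof. by rewrite /rf fD ReD. Qed.
Lemma rfZ (t : R) x : rf (t%:C%C *: x) = t * rf x.
Proof. by rewrite /rf fZ ReM_real. Qed.
Lemma rfN x : rf (- x) = - rf x.
Proof. by rewrite -scaleN1r (_ : -1 = (-1)%:C%C) ?rfZ ?mulN1r // rmorphN rmorph1. Qed.

Lemma ReMi (c : C) : complex.Re ('i%C * c) = - complex.Im c.
Proof. by case: c => a b /=; ring. Qed.

Theorem riesz : exists z : H, forall x, f x = ip z x.
Proof.
have [K hK] := hb.
pose k : R := `|K|.
have k0 : 0 <= k by rewrite normr_ge0.
have hk : forall x, rf x ^+ 2 <= k * Nm x.
  by move=> x; apply: le_trans (hK x) _; rewrite ler_wpM2r ?Nm_ge0 ?ler_norm.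
pose J x := Nm x - 2 * rf x.
have Jlb : forall x, - k <= J x.
  move=> x; have := hk x; have := Nm_ge0 x; rewrite /J.
  have := sqr_ge0 (Nm x - k); move: (Nm x) (rf x) => N r; nra.
pose S := fun r : R => exists x, r = - J x.
have hS : has_sup S.
  split; first by exists (- J 0); exists 0.
  by exists k => r [x ->]; have := Jlb x; lra.
pose m := - sup S.
have mlb : forall x, m <= J x.
  move=> x; have := sup_upper_bound hS (ex_intro _ x erefl : S (- J x)).
  rewrite /m; lra.
have madh : forall e, 0 < e -> exists x, J x < m + e.
  move=> e e0; have [r [x ->] h] := sup_adherent e0 hS; exists x; rewrite /m; lra.
have hx : forall j : nat, exists x, J x < m + (j.+1%:R)^-1.
  by move=> j; apply: madh; rewrite invr_gt0 ltr0Sn.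
pose xs j := proj1_sig (constructive_indefinite_description _ (hx j)).
have hxs : forall j, J (xs j) < m + (j.+1%:R)^-1.
  by move=> j; exact: (proj2_sig (constructive_indefinite_description _ (hx j))).
have para : forall a b, Nm (a - b) = 2 * J a + 2 * J b - 4 * J ((2^-1)%:C%C *: (a + b)).
  move=> a b; rewrite NmB /J NmZ rfZ NmD rfD; by field.
have cau : forall j l, Nm (xs j - xs l) < 2 * (j.+1%:R)^-1 + 2 * (l.+1%:R)^-1.
  move=> j l; rewrite para; have := mlb ((2^-1)%:C%C *: (xs j + xs l)).
  have := hxs j; have := hxs l.
  move: (J (xs l)) (J (xs j)) (J ((2^-1)%:C%C *: (xs j + xs l))) (j.+1%:R^-1 : R) (l.+1%:R^-1 : R) => a b c u v; lra.
have [z hz] : exists z, forall e : R, 0 < e -> exists N : nat, forall n : nat, (N <= n)%N ->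
          Num.sqrt (Nm (xs n - z)) < e.
  apply: hs_complete => e e0.
  have e4 : 0 < e ^+ 2 / 4 by rewrite divr_gt0 ?exprn_gt0.
  have [N0 hN0] := inv_small e4.
  exists N0 => j l hj hl; apply: sqrt_lt => //.
  change (Nm (xs j - xs l) < e ^+ 2).
  have := cau j l; have := hN0 _ hj; have := hN0 _ hl.
  move: (Nm (xs j - xs l)) (j.+1%:R^-1 : R) (l.+1%:R^-1 : R) (e ^+ 2) => a u v E; lra.
have Jz : J z <= m.
  apply/ler_addgt0Pr => e e0.
  pose C0 := Num.sqrt (Nm z) + Num.sqrt k.
  have C00 : 0 <= C0 by rewrite addr_ge0 ?sqrtr_ge0.
  pose dl := e / (4 * (C0 + 1)).
  have dl0 : 0 < dl by rewrite divr_gt0 // mulr_gt0 //; lra.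
  have dlE : C0 * dl = e / 4 - dl by rewrite /dl; field; lra.
  have [N1 hN1] := hz _ dl0.
  have e2 : 0 < e / 2 by rewrite divr_gt0.
  have [N2 hN2] := inv_small e2.
  set j := maxn N1 N2.
  have h1 := hN1 j (leq_maxl _ _).
  have h2 := hN2 j (leq_maxr _ _).
  have h3 := hxs j.
  set d := xs j - z.
  have xE : xs j = z + d by rewrite /d addrC subrK.
  have JE : J (xs j) = J z + 2 * re z d + Nm d - 2 * rf d.
    by rewrite xE /J NmD rfD; ring.
  have c1 : - re z d <= Num.sqrt (Nm z) * Num.sqrt (Nm d).
    by apply: le_sqrtM; rewrite ?Nm_ge0 // sqrrN CS.
  have c2 : rf d <= Num.sqrt k * Num.sqrt (Nm d).
    by apply: le_sqrtM; rewrite ?Nm_ge0 ?hk.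
  have c3 : C0 * Num.sqrt (Nm d) <= C0 * dl by rewrite ler_wpM2l // ltW.
  have := Nm_ge0 d.
  have : Num.sqrt (Nm z) * Num.sqrt (Nm d) + Num.sqrt k * Num.sqrt (Nm d) =
     C0 * Num.sqrt (Nm d) by rewrite /C0; ring.
  move: c1 c2 c3 JE h3 h2 dlE; rewrite -/d.
  move: (Num.sqrt (Nm z) * Num.sqrt (Nm d)) (Num.sqrt k * Num.sqrt (Nm d))
    (C0 * Num.sqrt (Nm d)) (C0 * dl) => A B CC CD.
  move: (J (xs j)) (J z) (j.+1%:R^-1 : R) (re z d) (rf d) (Nm d) => a b u r1 r2 nd.
  lra.
pose g w := re z w - rf w.
have var : forall w, 0 <= 2 * g w + Nm w.
  move=> w; have := mlb (z + w); rewrite /J NmD rfD /g; rewrite /J in Jz; lra.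
have gpos : forall w, 0 <= g w.
  move=> w; rewrite leNgt; apply/negP => gn.
  pose t := - g w / (Nm w + 1).
  have N0 := Nm_ge0 w.
  have t0 : 0 < t by rewrite divr_gt0; lra.
  have gE : g w = - t * (Nm w + 1) by rewrite /t; field; lra.
  have := var (t%:C%C *: w); rewrite /g reZr rfZ NmZ -/(g w).
  have -> : t * re z w - t * rf w = t * g w by rewrite /g; ring.
  rewrite gE; move: (Nm w) N0 t0 => NN; nra.
have g0 : forall w, re z w = rf w.
  move=> w; have := gpos w; have := gpos (- w).
  rewrite /g reNr rfN; lra.
exists z => w; apply/eqP; rewrite eq_complex; apply/andP; split; apply/eqP.
  by have := g0 w; rewrite /re /rf.
have := g0 ('i%C *: w); rewrite /re /rf ipZr fZ !ReMi; lra.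
Qed.
End Riesz.

Section Adj.
Variable R : realType.
Local Notation C := R[i].

Lemma bounded_sq (A B : HilbertSpace R) (f : A -> B) : bounded_op f ->
  exists K : R, forall x, Nm (f x) <= K * Nm x.
Proof.
move=> [_ [K hK]]; exists (K ^+ 2) => x.
have := hK x; rewrite /hnorm -/(Nm (f x)) -/(Nm x).
rewrite -{2}(sqr_sqrtr (Nm_ge0 (f x))) -{2}(sqr_sqrtr (Nm_ge0 x)).
have := sqrtr_ge0 (Nm (f x)); have := sqrtr_ge0 (Nm x).
move: (Num.sqrt (Nm (f x))) (Num.sqrt (Nm x)) => s1 s2; nra.
Qed.

Lemma adj_r (A B : HilbertSpace R) (f : A -> B) g : is_adjoint f g ->
  forall x y, ip y (f x) = ip (g y) x.
Proof. by move=> h x y; rewrite ip_conj h -ip_conj. Qed.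

Lemma adj_uniq (A B : HilbertSpace R) (f : A -> B) g1 g2 :
  is_adjoint f g1 -> is_adjoint f g2 -> forall y, g1 y = g2 y.
Proof.
move=> h1 h2 y; apply/eqP; rewrite -subr_eq0; apply/eqP/ip_def.
by rewrite ipBr -h1 -h2 subrr.
Qed.

Lemma adjoint_exists (A B : HilbertSpace R) (f : A -> B) : bounded_op f ->
  exists g, is_adjoint f g.
Proof.
move=> hf; have [K hK] := bounded_sq hf; have [hl _] := hf.
have h : forall y : B, exists z : A, forall x, ip y (f x) = ip z x.
  move=> y; apply: riesz.
    by move=> a x x'; rewrite hl ipDr ipZr.
  exists (Nm y * K) => x; apply: le_trans (CS y (f x)) _.
  by rewrite -mulrA ler_wpM2l ?Nm_ge0.
exists (fun y => proj1_sig (constructive_indefinite_description _ (h y))) => x y.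
have := proj2_sig (constructive_indefinite_description _ (h y)) x.
by move=> e; rewrite ip_conj e -ip_conj.
Qed.

Lemma adjoint_spec (A B : HilbertSpace R) (f : A -> B) : bounded_op f ->
  is_adjoint f (adjoint f).
Proof. by move=> hf; rewrite /adjoint; apply: epsilon_spec; exact: adjoint_exists. Qed.

Lemma adjoint_spec' (A B : HilbertSpace R) (f : A -> B) g : is_adjoint f g ->
  is_adjoint f (adjoint f).
Proof. by move=> hg; rewrite /adjoint; apply: epsilon_spec; exists g. Qed.
End Adj.

Section Mx.
Variable R : realType.
Local Notation C := R[i].

Lemma quadE n (al : 'I_n -> R) (v : 'cV[C]_n) :
 ((map_mx Num.conj v)^T *m (diag_mx (\row_i (al i)%:C%C) - const_mx 1) *m v) ord0 ord0
  = \sum_i (al i)%:C%C * (Num.conj (v i ord0) * v i ord0)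
    - (\sum_i Num.conj (v i ord0)) * (\sum_i v i ord0).
Proof.
rewrite mxE mulr_sumr -sumrB; apply: eq_bigr => j _.
rewrite mxE.
have -> : \sum_k (map_mx Num.conj v)^T ord0 k * (diag_mx (\row_i (al i)%:C%C) - const_mx 1) k j
  = Num.conj (v j ord0) * (al j)%:C%C - \sum_k Num.conj (v k ord0).
  rewrite (bigD1 j) //= [X in _ = _ - X](bigD1 j) //=.
  rewrite !mxE eqxx mulr1n.
  rewrite (eq_bigr (fun k => - Num.conj (v k ord0))) => [|k /negbTE kj]; last first.
    by rewrite !mxE kj mulr0n sub0r mulrN1.
  rewrite sumrN; ring.
ring.
Qed.
End Mx.

Section Alpha.
Variable R : realType.
Local Notation C := R[i].

Lemma al_facts n (al : 'I_n -> R) : in_An al ->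
  (forall i, 1 <= al i) /\ \sum_i (al i)^-1 <= 1.
Proof.
move=> hA.
have ge1 : forall i, 1 <= al i.
  move=> i; have := hA (\col_j ((j == i)%:R)); rewrite quadE.
  set v := \col_j _.
  have vE : forall k, v k ord0 = (k == i)%:R by move=> k; rewrite mxE.
  have s1 : \sum_k (al k)%:C%C * (Num.conj (v k ord0) * v k ord0) = (al i)%:C%C.
    rewrite (bigD1 i) //= big1 ?addr0 => [|k ki]; rewrite !vE ?eqxx ?(negbTE ki).
      by rewrite conjC1 !mulr1.
    by rewrite conjC0 !mulr0.
  have s2 : \sum_k Num.conj (v k ord0) = 1.
    rewrite (bigD1 i) //= big1 ?addr0 => [|k ki]; rewrite !vE ?eqxx ?(negbTE ki).
      by rewrite conjC1.
    by rewrite conjC0.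
  have s3 : \sum_k v k ord0 = 1.
    rewrite (bigD1 i) //= big1 ?addr0 => [|k ki]; rewrite !vE ?eqxx ?(negbTE ki) //.
  rewrite s1 s2 s3 mulr1 -(rmorph1 (real_complex R)) -rmorphB ler0c.
  by rewrite subr_ge0.
split=> //.
have := hA (\col_j ((al j)^-1)%:C%C); rewrite quadE.
set v := \col_j _.
have vE : forall k, v k ord0 = ((al k)^-1)%:C%C by move=> k; rewrite mxE.
set s := \sum_i (al i)^-1.
have s1 : \sum_k (al k)%:C%C * (Num.conj (v k ord0) * v k ord0) = s%:C%C.
  rewrite rmorph_sum; apply: eq_bigr => k _; rewrite vE conj_real -!rmorphM.
  congr (_%:C%C); have := ge1 k => h; field; lra.
have s2 : \sum_k Num.conj (v k ord0) = s%:C%C.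
  by rewrite rmorph_sum; apply: eq_bigr => k _; rewrite vE conj_real.
have s3 : \sum_k v k ord0 = s%:C%C.
  by rewrite rmorph_sum; apply: eq_bigr => k _; rewrite vE.
rewrite s1 s2 s3 -rmorphM -rmorphB ler0c => h.
have s0 : 0 <= s by rewrite sumr_ge0 // => i _; rewrite invr_ge0; have := ge1 i; lra.
nra.
Qed.
End Alpha.

Section Key.
Variable R : realType.
Local Notation C := R[i].
Variable H : HilbertSpace R.
Variable rho : H -> H.
Hypothesis hl : linf rho.
Hypothesis hp : forall x, 0 <= ip x (rho x).

Lemma key n (al : 'I_n -> R) (w : 'I_n -> H) :
  (forall i, 1 <= al i) -> \sum_i (al i)^-1 <= 1 ->
  ip (\sum_i w i) (rho (\sum_i w i)) <= \sum_i (al i)%:C%C * ip (w i) (rho (w i)).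
Proof.
move=> ge1 sle1.
set W := \sum_i w i.
pose b i := ((al i)^-1)%:C%C.
pose s := \sum_i (al i)^-1.
have E : \sum_i (al i)%:C%C * ip (w i - b i *: W) (rho (w i - b i *: W))
   = \sum_i (al i)%:C%C * ip (w i) (rho (w i)) - ip W (rho W) - ip W (rho W)
     + s%:C%C * ip W (rho W).
  rewrite (eq_bigr (fun i => (al i)%:C%C * ip (w i) (rho (w i)) - ip (w i) (rho W)
        - ip W (rho (w i)) + b i * ip W (rho W))); last first.
    move=> i _; rewrite (lfB hl) (lfZ hl) ipBl !ipBr !ipZl !ipZr /b conj_real.
    have ab : (al i)%:C%C * ((al i)^-1)%:C%C = 1.
      by rewrite -rmorphM mulfV ?rmorph1 //; have := ge1 i; lra.
    move: ab; set a := (al i)%:C%C; set bb := ((al i)^-1)%:C%C => ab.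
    set X := ip (w i) (rho (w i)); set Y := ip (w i) (rho W).
    set Z := ip W (rho (w i)); set T := ip W (rho W).
    rewrite -[Y in RHS]mul1r -[Z in RHS]mul1r -[bb * T in RHS]mul1r -ab; ring.
  rewrite !big_split /= !sumrN -ip_suml -ip_sumr -(lf_sum hl) -/W.
  by rewrite -mulr_suml /b -rmorph_sum.
rewrite -subr_ge0.
have -> : \sum_i (al i)%:C%C * ip (w i) (rho (w i)) - ip W (rho W) =
  \sum_i (al i)%:C%C * ip (w i - b i *: W) (rho (w i - b i *: W))
   + (1 - s)%:C%C * ip W (rho W).
  by rewrite E rmorphB rmorph1; ring.
apply: addr_ge0.
  apply: sumr_ge0 => i _; apply: mulr_ge0 => //.
  by rewrite ler0c; have := ge1 i; lra.
by apply: mulr_ge0 => //; rewrite ler0c subr_ge0.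
Qed.
End Key.

Section ONB.
Variable R : realType.
Local Notation C := R[i].
Variable H : HilbertSpace R.
Variable m : nat.
Variable F : 'I_m -> H.
Hypothesis hF : forall i j, ip (F i) (F j) = (i == j)%:R.

Lemma ip_F_sum (d : 'I_m -> C) k : ip (F k) (\sum_j d j *: F j) = d k.
Proof.
rewrite ip_sumr (bigD1 k) //= big1 ?addr0 => [|j jk].
  by rewrite ipZr hF eqxx mulr1.
by rewrite ipZr hF eq_sym (negbTE jk) mulr0.
Qed.
Lemma ip_sum_F (d : 'I_m -> C) k : ip (\sum_j d j *: F j) (F k) = Num.conj (d k).
Proof. by rewrite ip_conj ip_F_sum. Qed.

Lemma bessel (phi : H) :
  \sum_k ip phi (F k) * ip (F k) phi <= ip phi phi.
Proof.
pose d k := ip (F k) phi.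
pose r := phi - \sum_k d k *: F k.
have h := ip_pos r.
have S1 : ip phi (\sum_k d k *: F k) = \sum_k ip phi (F k) * ip (F k) phi.
  by rewrite ip_sumr; apply: eq_bigr => k _; rewrite ipZr mulrC.
have S2 : ip (\sum_k d k *: F k) phi = \sum_k ip phi (F k) * ip (F k) phi.
  by rewrite ip_suml; apply: eq_bigr => k _; rewrite ipZl /d -ip_conj.
have S3 : ip (\sum_k d k *: F k) (\sum_k d k *: F k) = \sum_k ip phi (F k) * ip (F k) phi.
  by rewrite ip_suml; apply: eq_bigr => k _; rewrite ipZl ip_F_sum /d -ip_conj.
move: h; rewrite /r ipBl !ipBr S1 S2 S3.
set S := \sum_k _ => h; rewrite -subr_ge0.
by have -> : ip phi phi - S = ip phi phi - S - (S - S) by rewrite subrr subr0.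
Qed.
End ONB.

Section Rank1.
Variable R : realType.
Local Notation C := R[i].
Variable H : HilbertSpace R.

Lemma rank1_ptc (phi : H) : psd_trace_class (fun z : H => ip phi z *: phi).
Proof.
split; first split; first split.
- by move=> a x y; rewrite ipDr ipZr scalerDl scalerA.
- exists (Nm phi) => x; rewrite /hnorm -/(Nm _) -/(Nm x) NmZc.
  have h := CSc phi x.
  apply: le_trans (ler_wsqrtr (_ : _ <= Nm phi ^+ 2 * Nm x)) _.
    move: h (Nm_ge0 phi); move: (complex.Re ((Num.conj (ip phi x)) * ip phi x)) (Nm phi) (Nm x) => a p q.
    nra.
  by rewrite sqrtrM ?sqrtr_sqr ?ger0_norm ?Nm_ge0 // exprn_ge0 ?Nm_ge0.
- by move=> x; rewrite ipZr [ip x phi]ip_conj mul_conjC_ge0.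
exists (Nm phi) => s hs.
rewrite (big_nth 0) big_mkord -ipxx.
have hF : forall i j : 'I_(size s), ip (nth 0 s i) (nth 0 s j) = (i == j)%:R.
  by move=> i j; apply: hs.
apply: le_trans (bessel hF phi); rewrite le_eqVlt; apply/orP; left; apply/eqP.
by apply: eq_bigr => k _; rewrite ipZr mulrC.
Qed.
End Rank1.

Section Parts.
Variable R : realType.
Local Notation C := R[i].

Lemma part1 (A B : HilbertSpace R) n (alpha : 'I_n -> R) : in_An alpha ->
   forall M : 'I_n -> A -> B, (forall i, bounded_op (M i)) ->
   forall rho : A -> A, psd_trace_class rho ->
     loewner
       (fun y : B => sum_op M (rho (adjoint (sum_op M) y)))
       (fun y : B => \sum_i ((alpha i)%:C%C *: M i (rho (adjoint (M i) y)))).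
Proof.
move=> hA M hM rho [[[hl _] hp] _] y.
have [ge1 sle1] := al_facts hA.
pose ws i := adjoint (M i) y.
have hadj i := adjoint_spec (hM i).
have hsum : is_adjoint (sum_op M) (fun y => \sum_i adjoint (M i) y).
  move=> x y'; rewrite /sum_op ip_suml ip_sumr; apply: eq_bigr => i _; exact: hadj.
have hS := adjoint_spec' hsum.
have uE : adjoint (sum_op M) y = \sum_i ws i := adj_uniq hS hsum y.
rewrite /= (adj_r hS) uE ip_sumr.
rewrite (eq_bigr (fun i => (alpha i)%:C%C * ip (ws i) (rho (ws i)))); last first.
  by move=> i _; rewrite ipZr (adj_r (hadj i)).
exact: key.
Qed.

Lemma part2 (A : HilbertSpace R) n (alpha : 'I_n -> R) (P : 'I_n -> A -> A) :
     proj_measurement P -> (forall i, P i <> (fun _ => 0)) ->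
     (forall rho : A -> A, psd_trace_class rho ->
        loewner rho (fun x : A => \sum_i ((alpha i)%:C%C *: P i (rho (P i x))))) ->
     in_An alpha.
Proof.
move=> [hb [hsa [hid hsum]]] hnz hL.
have hlin i : linf (P i) by case: (hb i).
have sa i : is_adjoint (P i) (P i) by have := adjoint_spec (hb i); rewrite -(hsa i).
have ipP i x : ip x (P i x) = ip (P i x) (P i x).
  by rewrite (sa i) hid.
have orth : forall i j x, i != j -> P i x = x -> P j x = 0.
  move=> i j x ij hx; apply: ip_def.
  have e1 : ip x x = \sum_k ip (P k x) (P k x).
    rewrite -{2}(hsum x) /sum_op ip_sumr; apply: eq_bigr => k _; exact: ipP.
  move: e1; rewrite (bigD1 i) //= hx -{1}[ip x x]addr0 => /addrI /esym e2; apply: (psumr_eq0P _ e2) => [k _|]; first exact: ip_pos.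
  by rewrite eq_sym.
have ex i : exists e, P i e = e /\ ip e e = 1.
  have [x hx] : exists x, P i x <> 0.
    apply: NNPP => hn; apply: (hnz i); apply: functional_extensionality => x.
    by apply: NNPP => hx; apply: hn; exists x.
  set y := P i x in hx.
  have Py : P i y = y by rewrite /y hid.
  have Ny : 0 < Nm y.
    rewrite lt_def Nm_ge0 andbT; apply/eqP => h; exact: hx (Nm_eq0 h).
  exists (((Num.sqrt (Nm y))^-1)%:C%C *: y); split.
    by rewrite (lfZ (hlin i)) Py.
  by rewrite ipxx NmZ exprVn (sqr_sqrtr (Nm_ge0 y)) mulVf ?rmorph1 // lt0r_neq0.
pose e i := proj1_sig (constructive_indefinite_description _ (ex i)).
have he i : P i (e i) = e i /\ ip (e i) (e i) = 1.
  exact: (proj2_sig (constructive_indefinite_description _ (ex i))).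
have hF : forall i j, ip (e i) (e j) = (i == j)%:R.
  move=> i j; have [->|ij] := eqVneq i j; first by rewrite (he j).2.
  rewrite -(he i).1 (sa i) (orth j i (e j)) ?ip0r // ?(he j).1 //.
  by rewrite eq_sym.
have Psum : forall i (d : 'I_n -> C), P i (\sum_k d k *: e k) = d i *: e i.
  move=> i d; rewrite (lf_sum (hlin i)) (bigD1 i) //= big1 ?addr0 => [|k ki].
    by rewrite (lfZ (hlin i)) (he i).1.
  by rewrite (lfZ (hlin i)) (orth k i) ?scaler0 ?(he k).1.
move=> v; rewrite quadE.
pose c k := v k ord0.
pose phi := \sum_k (fun _ => 1) k *: e k.
pose x := \sum_k c k *: e k.
have := hL _ (rank1_ptc phi) x; rewrite /=.
rewrite ipZr (ip_sumr phi) (ip_sumr x).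
have h1 : \sum_j ip phi (c j *: e j) = \sum_j c j.
  by apply: eq_bigr => j _; rewrite ipZr ip_sum_F // conjC1 mulr1.
rewrite h1.
have h2 : \sum_k ip x (1 *: e k) = \sum_k Num.conj (c k).
  by apply: eq_bigr => j _; rewrite scale1r ip_sum_F.
rewrite h2.
have h3 : \sum_i ip x ((alpha i)%:C%C *: P i (ip phi (P i x) *: phi))
   = \sum_i (alpha i)%:C%C * (Num.conj (c i) * c i).
  apply: eq_bigr => i _; rewrite ipZr Psum (lfZ (hlin i)) Psum ipZr.
  rewrite !ipZr /phi /x !ip_sum_F // conjC1 !mulr1 mul1r; ring.
move=> h; rewrite (ip_sumr x) h3 in h.
by rewrite subr_ge0 mulrC.
Qed.
End Parts.

Theorem lemma1 (R : realType) (A B : HilbertSpace R) (n : nat) (hn : (2 <= n)%N) :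
  (forall alpha : 'I_n -> R, in_An alpha ->
   forall M : 'I_n -> A -> B, (forall i, bounded_op (M i)) ->
   forall rho : A -> A, psd_trace_class rho ->
     loewner
       (fun y : B => sum_op M (rho (adjoint (sum_op M) y)))
       (fun y : B => \sum_i ((alpha i)%:C%C *: M i (rho (adjoint (M i) y)))))
  /\
  (forall alpha : 'I_n -> R, forall P : 'I_n -> A -> A,
     proj_measurement P -> (forall i, P i <> (fun _ => 0)) ->
     (forall rho : A -> A, psd_trace_class rho ->
        loewner rho (fun x : A => \sum_i ((alpha i)%:C%C *: P i (rho (P i x))))) ->
     in_An alpha).
Proof.
split; [exact: part1 | exact: part2].
Qed.
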